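(* For all integers $n\ge2$ and $0\le m\le n-1$, define $$\mathcal{K}_{n,m}=-\binom{n}{2}\binom{n}{m}\binom{n-2}{m}-\binom{n}{2}\sum_{k=1}^{m}(-1)^k\Big(\binom{n}{m+k}\binom{n-2}{m-k}+\binom{n}{m-k}\binom{n-2}{m+k}\Big)+\frac{2n-2m-1}{2}\sum_{k=0}^{m}(-1)^k(1+2k)\binom{n}{m+1+k}\binom{n}{m-k}.$$ Then $\mathcal{K}_{n,m}=\dfrac{n^2}{2}\binom{n-1}{m}$.
   Context: $\binom{j}{k}=\frac{j!}{k!(j-k)!}$ if $0\le k\le j$ and $\binom{j}{k}=0$ otherwise (for all integers $j,k$). *)

(* Defs.v *)
From mathcomp Require Import all_boot all_order all_algebra.
Set Implicit Arguments. Unset Strict Implicit. Unset Printing Implicit Defensive.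
Import Order.TTheory GRing.Theory Num.Theory.
Local Open Scope ring_scope.

(* K_{n,m} as a rational number. 'C(j,k) is mathcomp's binomial, which is 0
   when k > j, matching the paper's convention. Here k ranges over 1..m or 0..m
   so m - k is never truncated; n - 2 is exact since n >= 2 in the theorem. *)
Definition Knm (n m : nat) : rat :=
  - ('C(n, 2) * 'C(n, m) * 'C(n - 2, m))%:R
  - ('C(n, 2))%:R * \sum_(1 <= k < m.+1)
        (-1) ^+ k * (('C(n, m + k) * 'C(n - 2, m - k)
                     + 'C(n, m - k) * 'C(n - 2, m + k))%N)%:R
  + ((2 * n - 2 * m - 1)%N)%:R / 2 * \sum_(0 <= k < m.+1)
        (-1) ^+ k * (1 + 2 * k)%N%:R * ('C(n, m + 1 + k) * 'C(n, m - k))%N%:R.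

(* Main.v *)
Require Import Defs.
From mathcomp Require Import all_boot all_order all_algebra.
From mathcomp Require Import ring zify.
Set Implicit Arguments. Unset Strict Implicit. Unset Printing Implicit Defensive.
Import Order.TTheory GRing.Theory Num.Theory.
Local Open Scope ring_scope.
Definition P (n : nat) : {poly rat} := (1 + 'X) ^+ n.
Definition Q (n : nat) : {poly rat} := (1 - 'X) ^+ n.
Definition R (n : nat) : {poly rat} := (1 - 'X * 'X) ^+ n.

Lemma coefP n i : (P n)`_i = 'C(n, i)%:R.
Proof.
elim: n i => [|n IH] i.
  by rewrite /P expr0 coefC; case: i.
rewrite /P exprSr mulrDr mulr1 coefD coefMX /P IH.
case: i => [|i] /=; first by rewrite addr0 !bin0.
by rewrite IH binS natrD addrC.
Qed.

Lemma coefQ n i : (Q n)`_i = (-1) ^+ i * 'C(n, i)%:R.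
Proof.
elim: n i => [|n IH] i.
  by rewrite /Q expr0 coefC; case: i => [|i] /=; rewrite ?mulr1 ?mulr0.
rewrite /Q exprSr mulrBr mulr1 coefB coefMX -/(Q n) IH.
case: i => [|i] /=; first by rewrite subr0 !bin0.
by rewrite IH binS natrD exprS mulrDr mulN1r !mulNr.
Qed.

Lemma coefR n i : (R n)`_i = if odd i then 0 else (-1) ^+ i./2 * 'C(n, i./2)%:R.
Proof.
elim: n i => [|n IH] i.
  rewrite /R expr0 coefC; case: i => [|[|i]] /=; first by rewrite mulr1.
    by [].
  by case: ifP => //; rewrite mulr0.
rewrite /R exprSr mulrBr mulr1 coefB mulrA coefMX coefMX -/(R n) IH.
case: i => [|[|i]] /=; first by rewrite subr0 !bin0.
  by rewrite subr0.
rewrite IH /= negbK; case: ifP => _; first by rewrite subr0.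
by rewrite binS natrD exprS mulrDr mulN1r !mulNr.
Qed.

Lemma QPR n : Q n * P n = R n.
Proof. by rewrite /Q /P /R -exprMn; congr (_ ^+ _); rewrite mulrBl mul1r mulrDr mulr1 opprD addrA addrK. Qed.

Lemma split_odd (F : nat -> rat) m :
  \sum_(0 <= j < (2 * m).+2) F j = \sum_(0 <= k < m.+1) (F (m - k)%N + F (m.+1 + k)%N).
Proof.
rewrite big_split /= (@big_cat_nat _ _ _ m.+1) //=; last by lia.
congr (_ + _).
  rewrite big_nat_rev /=; apply: eq_big_nat => i /andP[_ hi]; congr F; lia.
rewrite -{1}(add0n m.+1) big_addn.
have -> : ((2 * m).+2 - m.+1 = m.+1)%N by lia.
apply: eq_big_nat => i _; congr F; lia.
Qed.

Lemma split_even (F : nat -> rat) m :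
  \sum_(0 <= j < (2 * m).+1) F j = F m + \sum_(1 <= k < m.+1) (F (m + k)%N + F (m - k)%N).
Proof.
rewrite big_split /=.
have -> : \sum_(0 <= j < (2 * m).+1) F j =
  \sum_(0 <= j < m) F j + (F m + \sum_(m.+1 <= j < (2 * m).+1) F j).
  rewrite (@big_cat_nat _ _ _ m) //=; last by lia.
  by rewrite (@big_ltn _ _ _ m); [|lia].
rewrite addrCA; congr (_ + _); rewrite addrC; congr (_ + _).
  rewrite -{1}(add0n m.+1) big_addn.
  have -> : ((2 * m).+1 - m.+1 = m)%N by lia.
  rewrite -{1}(add0n 1%N) big_addn /= subn1.
  apply: eq_big_nat => i _; congr F; lia.
rewrite -{1}(add0n 1%N) big_addn /= big_nat_rev /= subn1.
apply: eq_big_nat => i /andP[_ hi]; congr F; lia.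
Qed.

Lemma sgn_sq m : (-1) ^+ m * (-1) ^+ m = 1 :> rat.
Proof. by rewrite -signr_odd -expr2 sqrr_sign. Qed.

Lemma sgn_mk m k : (k <= m)%N -> (-1) ^+ (m - k) = (-1) ^+ (m + k) :> rat.
Proof.
move=> hk; have -> : (m + k = (m - k) + k * 2)%N by lia.
by rewrite exprD exprM sqrr_sign mulr1.
Qed.

Lemma coef_half m : (2 * m)./2 = m.
Proof. by rewrite mul2n doubleK. Qed.

Lemma coefR_even n m : (R n)`_(2 * m) = (-1) ^+ m * 'C(n, m)%:R.
Proof. by rewrite coefR oddM /= coef_half. Qed.

Lemma coefR_odd n m : (R n)`_((2 * m).+1) = 0.
Proof. by rewrite coefR /= oddM. Qed.

Lemma Q2M (p : {poly rat}) : Q 2 * p = p - ('X * p) *+ 2 + 'X * ('X * p).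
Proof. rewrite /Q; ring. Qed.

Lemma conv1 n m : (2 <= n)%N ->
  \sum_(0 <= j < (2 * m).+1) (Q n)`_j * (P (n - 2))`_(2 * m - j)
  = if m is m'.+1 then (-1) ^+ m * ('C(n - 2, m)%:R - 'C(n - 2, m')%:R) else 1.
Proof.
move=> hn; rewrite big_mkord -coefM.
have -> : Q n = Q 2 * Q (n - 2) by rewrite /Q -exprD subnKC.
rewrite -mulrA QPR Q2M coefD coefB coefMn !coefXM.
case: m => [|m].
  by rewrite muln0 /= subr0 addr0 -[0%N](muln0 2) coefR_even mul1r bin0.
have -> : (2 * m.+1 = (2 * m).+2)%N by lia.
have e : forall k, ((k.+1 == 0)%N = false) by [].
rewrite !e -[((2 * m).+2).-1]/((2 * m).+1) -[((2 * m).+1).-1]/(2 * m)%N.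
rewrite coefR_odd mul0rn subr0.
have -> : ((2 * m).+2 = 2 * m.+1)%N by lia.
rewrite !coefR_even.
rewrite ?e exprS.
move: ('C(n - 2, m.+1))%:R ('C(n - 2, m))%:R ((-1) ^+ m : rat) => a b c.
by rewrite !mulN1r !mulNr mulrBr opprD opprK.
Qed.

Lemma derivP n : (P n.+1)^`() = P n *+ n.+1.
Proof. by rewrite /P deriv_exp derivD derivC derivX add0r mul1r. Qed.

Lemma derivQ n : (Q n.+1)^`() = - Q n *+ n.+1.
Proof. by rewrite /Q deriv_exp derivB derivC derivX sub0r mulN1r. Qed.

Lemma coefXD (p : {poly rat}) i : ('X * p^`())`_i = p`_i *+ i.
Proof. by rewrite coefXM; case: i => [|i] //=; rewrite coef_deriv. Qed.

Lemma polyid n : Q n.+1 * ('X * (P n.+1)^`()) - ('X * (Q n.+1)^`()) * P n.+1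
  = 'X * R n *+ (2 * n.+1).
Proof.
have hQ : Q n.+1 = Q n * (1 - 'X) by rewrite /Q exprSr.
have hP : P n.+1 = P n * (1 + 'X) by rewrite /P exprSr.
rewrite derivP derivQ hQ hP -QPR.
move: (Q n) (P n) => q p.
ring.
Qed.


Lemma conv2 n m :
  \sum_(0 <= j < (2 * m).+2)
     ((Q n.+1)`_j * ((P n.+1)`_((2 * m).+1 - j) *+ ((2 * m).+1 - j))
      - ((Q n.+1)`_j *+ j) * (P n.+1)`_((2 * m).+1 - j))
  = (-1) ^+ m * 'C(n, m)%:R *+ (2 * n.+1).
Proof.
rewrite big_mkord sumrB.
under eq_bigr do rewrite -coefXD.
under [X in _ - X]eq_bigr do rewrite -coefXD.
by rewrite -!coefM -coefB polyid coefMn coefXM /= coefR_even.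
Qed.

Theorem proposition2p1 (n m : nat) (hn : (2 <= n)%N) (hm : (m <= n - 1)%N) :
  Knm n m = (n ^ 2)%N%:R / 2 * ('C(n - 1, m))%:R.
Proof.
case: n hn hm => [|[|n1]] // _ hm.
rewrite /Knm.
set A := \sum_(1 <= k < m.+1) _.
set B := \sum_(0 <= k < m.+1) _.
have h1 : \sum_(0 <= j < (2 * m).+1) (Q n1.+2)`_j * (P (n1.+2 - 2))`_(2 * m - j)
    = (-1) ^+ m * ('C(n1.+2, m)%:R * 'C(n1.+2 - 2, m)%:R + A).
  rewrite split_even mulrDr /A mulr_sumr; congr (_ + _).
    rewrite coefQ coefP.
    have -> : (2 * m - m = m)%N by lia.
    by rewrite mulrA.
  apply: eq_big_nat => k /andP[hk1 hk2].
  rewrite !coefQ !coefP.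
  have -> : (2 * m - (m + k) = m - k)%N by lia.
  have -> : (2 * m - (m - k) = m + k)%N by lia.
  rewrite sgn_mk; last by lia.
  by rewrite mulrA -exprD natrD !natrM mulrDr !mulrA.
have h2 : \sum_(0 <= j < (2 * m).+2)
     ((Q n1.+2)`_j * ((P n1.+2)`_((2 * m).+1 - j) *+ ((2 * m).+1 - j))
      - ((Q n1.+2)`_j *+ j) * (P n1.+2)`_((2 * m).+1 - j))
    = 2 * ((-1) ^+ m * B).
  rewrite split_odd /B !mulr_sumr.
  apply: eq_big_nat => k /andP[hk1 hk2].
  have hd : m = (k + (m - k))%N by lia.
  move: (m - k)%N hd => d hd; subst m.
  rewrite !coefQ !coefP.
  have -> : ((2 * (k + d)).+1 - d = (k + d).+1 + k)%N by lia.
  have -> : ((2 * (k + d)).+1 - ((k + d).+1 + k) = d)%N by lia.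
  have -> : (k + d + 1 + k = (k + d).+1 + k)%N by lia.
  have -> : (-1) ^+ ((k + d).+1 + k) = - (-1) ^+ d :> rat.
    have -> : ((k + d).+1 + k = d + k * 2 + 1)%N by lia.
    by rewrite !exprD exprM sqrr_sign mulr1 expr1 mulrN1.
  have -> : (-1) ^+ (k + d) * ((-1) ^+ k * (1 + 2 * k)%:R *
     ('C(n1.+2, (k + d).+1 + k) * 'C(n1.+2, d))%:R) =
     (-1) ^+ d * ((1 + 2 * k)%:R * ('C(n1.+2, (k + d).+1 + k) * 'C(n1.+2, d))%:R) :> rat.
    rewrite !mulrA -exprD.
    have -> : (k + d + k = d + k * 2)%N by lia.
    by rewrite exprD exprM sqrr_sign mulr1.
  move: ((-1) ^+ d : rat) ('C(n1.+2, (k + d).+1 + k)) ('C(n1.+2, d)) => e a b.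
  rewrite natrM; ring.
rewrite conv1 // in h1.
rewrite conv2 in h2.
have hs := sgn_sq m.
have e2 : (n1.+2 - 2 = n1)%N by lia.
have e1 : (n1.+2 - 1 = n1.+1)%N by lia.
rewrite e2 in h1 *; rewrite e1.
have hB : B = n1.+2%:R * 'C(n1.+1, m)%:R.
  transitivity ((-1) ^+ m * (-1) ^+ m * B); first by rewrite hs mul1r.
  transitivity ((-1) ^+ m * (2 * ((-1) ^+ m * B)) / 2).
    by move: ((-1) ^+ m : rat) => s0; field.
  rewrite -h2 -mulr_natr mulrA mulrA hs mul1r natrM.
  by move: ('C(n1.+1, m))%:R => c; field.
have hC2 : 'C(n1.+2, 2)%:R = (n1.+2 * n1.+1)%:R / 2 :> rat.
  have := mul_bin_diag n1.+2 1; rewrite bin1 /= => ->.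
  by rewrite natrM; move: ('C(n1.+2, 2))%:R => c; field.
rewrite hB hC2 !natrM.
clear h2 hB B.
move: h1; set c1 := (X in X = _ -> _); move=> h1.
have hA : A = (-1) ^+ m * c1 - 'C(n1.+2, m)%:R * 'C(n1, m)%:R.
  by rewrite h1 mulrA hs mul1r addrAC subrr add0r.
rewrite hA /c1; clear hA h1 c1 A.
case: m hs hm => [|m'] hs hm.
  rewrite hC2 !bin0 expr0 mul1r.
  have -> : (2 * n1.+2 - 2 * 0 - 1 = 2 * n1 + 3)%N by lia.
  by rewrite natrD natrM; field.
rewrite hC2 mulrA hs mul1r (binS n1 m').
have hrel := mul_bin_left n1 m'.
have [u hu] : exists u, n1 = (m' + u)%N by exists (n1 - m')%N; lia.
subst n1.
have -> : (2 * (m' + u).+2 - 2 * m'.+1 - 1 = 2 * u + 1)%N by lia.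
rewrite addKn in hrel.
move: hrel; move: ('C((m' + u).+2, m'.+1)) ('C(m' + u, m'.+1)) ('C(m' + u, m')) => z x y hrel.
have hx : x%:R = u%:R * y%:R / m'.+1%:R :> rat.
  rewrite -natrM -hrel natrM; field; by rewrite addrC natr1 pnatr_eq0.
rewrite !natrD hx !natrM.
field; by rewrite addrC natr1 pnatr_eq0.
Qed.
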